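(* Let $a>3$ be irrational and $t$ a positive integer, and let $U$, $D$ be as follows: $U = \#\{(x,y)\in\mathbb{Z}^2 : x \ge 0,\ x + a y \ge t(a+3)/12,\ x + 3y \le t/2\}$ and $D = \#\{(x,y)\in\mathbb{Z}^2 : y \ge 0,\ x + 3y \ge t/2,\ x + a y \le t(a+3)/12\}$. Let $d(t) = \lceil t/12\rceil$ if $t$ is even and $d(t)=0$ if $t$ is odd. Then \[ L_{\mathcal{T}_{\frac{a+3}{12},\,\frac{a+3}{12a}}}(t) = L_{\mathcal{T}_{1/2,\,1/6}}(t) + D - U - d(t). \]
   Context: For $u,v>0$, $\mathcal{T}_{u,v}$ denotes the closed triangle with vertices $(0,0)$, $(u,0)$, $(0,v)$, and its Ehrhart function is $L_{\mathcal{T}_{u,v}}(t) = \#\left(\mathbb{Z}^2 \cap \mathcal{T}_{tu,tv}\right)$ for positive integers $t$. Here $d(t)$ equals the number of lattice points on the segment of the line $2x+6y=t$ with $0\le y<t/12$. *)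

(* Defs.v *)
From HB Require Import structures.
From mathcomp Require Import all_boot all_order all_algebra.
From mathcomp Require Import finmap.
From mathcomp Require Import boolp classical_sets cardinality reals.
Set Implicit Arguments. Unset Strict Implicit. Unset Printing Implicit Defensive.
Import Order.TTheory GRing.Theory Num.Theory.
Local Open Scope classical_set_scope.
Local Open Scope ring_scope.

(* Number of integer points in a set of lattice points (the sets used below are
   all finite; fset_set returns the empty fset on infinite sets). *)
Definition latcount (A : set (int * int)) : nat := #|` fset_set A|%fset.

Definition triangle (R : realType) (u v : R) : set (R * R) :=
  [set p | 0 <= p.1 /\ 0 <= p.2 /\ p.1 / u + p.2 / v <= 1].

(* Ehrhart function L_{T_{u,v}}(t) = #(Z^2 ∩ T_{tu,tv}). *)
Definition ehrhartT (R : realType) (u v : R) (t : nat) : nat :=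
  latcount [set z | triangle (t%:R * u) (t%:R * v) (z.1%:~R, z.2%:~R)].

Definition setU_ (R : realType) (a : R) (t : nat) : set (int * int) :=
  [set z | 0 <= z.1 /\
           t%:R * (a + 3) / 12 <= z.1%:~R + a * z.2%:~R :> R /\
           z.1%:~R + 3 * z.2%:~R <= t%:R / 2 :> R].

Definition setD_ (R : realType) (a : R) (t : nat) : set (int * int) :=
  [set z | 0 <= z.2 /\
           t%:R / 2 <= z.1%:~R + 3 * z.2%:~R :> R /\
           z.1%:~R + a * z.2%:~R <= t%:R * (a + 3) / 12 :> R].

Definition dfun (t : nat) : int :=
  if odd t then 0 else Num.ceil (t%:R / 12 : rat).

(* Main.v *)
Require Import Defs.
From HB Require Import structures.
From mathcomp Require Import all_boot all_order all_algebra.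
From mathcomp Require Import finmap.
From mathcomp Require Import boolp classical_sets cardinality reals.
From mathcomp Require Import zify ring lra.
Import Order.TTheory GRing.Theory Num.Theory.

Section NatPart.
Local Open Scope nat_scope.
Lemma count_lt n K : count (fun j => j < K) (iota 0 n) = minn n K.
Proof.
elim: n => [|n IH]; first by rewrite min0n.
rewrite -addn1 iotaD count_cat IH /= add0n addn0; lia.
Qed.

Lemma cnt_i n t j : t < n ->
  count (fun i => (i.*2 + 6*j == t) && (12*j < t)) (iota 0 n) =
  ((12*j < t) && (t %% 2 == 0)).
Proof.
move=> tn.
case h: (12*j < t); last first.
  by rewrite (@eq_count _ _ pred0) ?count_pred0 // => i; rewrite andbF.
case e: (t %% 2 == 0); last first.
  rewrite (@eq_count _ _ pred0) ?count_pred0 // => i /=; rewrite andbT.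
  apply/negbTE/negP => /eqP; move/negbT: e; lia.
rewrite (@eq_count _ _ (pred1 ((t - 6*j) %/ 2))).
  by rewrite count_uniq_mem ?iota_uniq // mem_iota /=; apply/eqP; move/eqP: e; lia.
move=> i /=; rewrite andbT; apply/eqP/eqP; move/eqP: e; move: h; lia.
Qed.

Definition box n : seq (int*int) := [seq ((Posz i), (Posz j)) | j <- iota 0 n, i <- iota 0 n].

Lemma mem_box n (x y : int) : (0 <= x)%R -> (0 <= y)%R -> (x < (Posz n))%R -> (y < (Posz n))%R ->
  (x, y) \in box n.
Proof.
case: x => // x; case: y => // y _ _ hx hy.
apply/allpairsP; exists (y, x) => /=; rewrite !mem_iota /=; split => //; lia.
Qed.

Lemma box_uniq n : uniq (box n).
Proof.
apply: allpairs_uniq; rewrite ?iota_uniq //.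
by move=> [a b] [c d] _ _ /= [-> ->].
Qed.

Lemma countF n t : t < n ->
  count (fun z : int*int => ((2*z.1 + 6*z.2 == (Posz t)) && (12*z.2 < (Posz t)))%R) (box n)
  = (t %% 2 == 0) * ((t+11) %/ 12).
Proof.
move=> tn; rewrite /box count_flatten -map_comp.
rewrite (@eq_map _ _ _ (fun j => ((12*j < t) && (t %% 2 == 0) : nat))); last first.
  move=> j /=; rewrite count_map -(@cnt_i n t j tn); apply: eq_count => i /=.
  congr andb; apply/eqP/eqP; lia.
rewrite sumn_count.
rewrite (@eq_count _ _ (fun j => (j < (t+11) %/12) && (t %% 2 == 0))); last first.
  by move=> j /=; congr andb; apply/idP/idP; lia.
case: (t %% 2 == 0); last by rewrite (@eq_count _ _ pred0) ?count_pred0 // => j; rewrite andbF.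
rewrite mul1n (@eq_count _ _ (fun j => j < (t+11) %/12)); last by move=> j; rewrite andbT.
rewrite count_lt; lia.
Qed.

End NatPart.

Local Open Scope ring_scope.

Lemma core (R : realFieldType) (X Y Z T c : R) :
 (12*Y < T -> X + Z - c < X + 3*Y - T/2) ->
 (Y = T/12 -> X + Z - c = X + 3*Y - T/2) ->
 (T/12 < Y -> X + 3*Y - T/2 < X + Z - c) ->
 (X + Z = c -> Y = T/12) -> 0 < T ->
 ([&& 0<=X, 0<=Y & X + Z <= c] : nat) + [&& 0<=Y, X + 3*Y == T/2 & 12*Y < T]
   + [&& 0<=X, c <= X+Z & X + 3*Y <= T/2] =
 ([&& 0<=X, 0<=Y & X + 3*Y <= T/2] : nat) + [&& 0<=Y, T/2 <= X+3*Y & X + Z <= c].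
Proof.
move=> h1 h2 h3 h4 hT.
have [hw|hw|hw] := ltrgtP Y (T/12).
{ have f : X + Z - c < X + 3*Y - T/2 by apply: h1; lra.
  have -> : 12*Y < T by lra.
  case: (ltrgtP (X+Z) c) => g; last by exfalso; have := h4 g; lra.
  all: case: (lerP 0 X) => ?; case: (lerP 0 Y) => ?;
   case: (ltrgtP (X+3*Y) (T/2)) => ? //; exfalso; lra. }
{ have f : X + 3*Y - T/2 < X + Z - c by apply: h3; lra.
  have -> : 12*Y < T = false by apply/negbTE; rewrite -leNgt; lra.
  case: (ltrgtP (X+Z) c) => g; last by exfalso; have := h4 g; lra.
  all: case: (lerP 0 X) => ?; case: (lerP 0 Y) => ?;
   case: (ltrgtP (X+3*Y) (T/2)) => ? //; exfalso; lra. }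
have f := h2 hw.
have -> : 12*Y < T = false by apply/negbTE; rewrite -leNgt; lra.
case: (ltrgtP (X+Z) c) => g.
all: case: (lerP 0 X) => ?; case: (lerP 0 Y) => ?;
   case: (ltrgtP (X+3*Y) (T/2)) => ? //; exfalso; lra.
Qed.

Local Open Scope classical_set_scope.
Lemma latcount_count (A : set (int*int)) (s : seq (int*int)) :
  uniq s -> (forall z, A z -> z \in s) ->
  latcount A = count (fun z => `[< A z >]) s.
Proof.
move=> us As.
have fA : finite_set A.
  by apply: (sub_finite_set _ (finite_seq s)) => z /As.
rewrite /latcount -size_filter.
apply: perm_size; apply: uniq_perm; first exact: fset_uniq.
  exact: filter_uniq.
move=> z; rewrite mem_filter.
have -> : (z \in fset_set A) = (z \in A) by exact: in_fset_set.
apply/idP/andP => [/set_mem Az|[/asboolP Az _]]; last exact: mem_set.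
by split; [apply/asboolP|apply: As].
Qed.

Lemma asbool_b (P : Prop) (b : bool) : (P <-> b) -> `[< P >] = b.
Proof. by move=> h; apply/idP/idP => [/asboolP/h|/h/asboolP]. Qed.

Lemma tri1 (R : realType) (a T X Y : R) : 3 < a -> 0 < T ->
  `[< triangle (T * ((a + 3) / 12)) (T * ((a + 3) / (12 * a))) (X, Y) >] =
  [&& 0 <= X, 0 <= Y & X + a * Y <= T * (a + 3) / 12].
Proof.
move=> ha hT; apply: asbool_b; rewrite /triangle /=.
have e : X / (T * ((a + 3) / 12)) + Y / (T * ((a + 3) / (12 * a))) =
   (X + a*Y) / (T*(a+3)/12).
  by field; apply/and3P; split; apply: lt0r_neq0; lra.
have cpos : 0 < T * (a + 3) / 12 by apply: divr_gt0 => //; apply: mulr_gt0; lra.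
rewrite e ler_pdivrMr // mul1r.
by split => [[-> [-> ->]]|/and3P[-> -> ->]].
Qed.

Lemma tri2 (R : realType) (T X Y : R) : 0 < T ->
  `[< triangle (T * (1 / 2)) (T * (1 / 6)) (X, Y) >] =
  [&& 0 <= X, 0 <= Y & X + 3 * Y <= T / 2].
Proof.
move=> hT; apply: asbool_b; rewrite /triangle /=.
have e : X / (T * (1 / 2)) + Y / (T * (1 / 6)) = (X + 3*Y) / (T/2).
  by field; apply: lt0r_neq0; lra.
have cpos : 0 < T / 2 by apply: divr_gt0.
rewrite e ler_pdivrMr // mul1r.
by split => [[-> [-> ->]]|/and3P[-> -> ->]].
Qed.

Lemma irr_lem (R : realType) (a : R) (t : nat) (x y : int) : irrational a ->
  x%:~R + a * y%:~R = t%:R * (a + 3) / 12 -> y%:~R = t%:R / 12 :> R.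
Proof.
move=> ia h.
have e : a * (12 * y%:~R - t%:R) = 3 * t%:R - 12 * x%:~R by lra.
have [hy|hy] := eqVneq (12 * y - Posz t) 0.
  have : (12 * y%:~R - t%:R : R) = 0.
    by have := congr1 (fun z : int => z%:~R : R) hy; rewrite /= rmorphB rmorphM /=.
  lra.
exfalso; apply: ia.
exists (((3 * Posz t - 12 * x)%:~R : rat) / (12 * y - Posz t)%:~R) => //.
rewrite fmorph_div /= !ratr_int.
rewrite !(rmorphB, rmorphM) /=.
have hy' : (12 * y%:~R - t%:R : R) != 0.
  apply: contra hy => /eqP h0; apply/eqP.
  apply: (@intr_inj R); rewrite rmorphB rmorphM /=. exact: h0.
apply: (mulIf hy'); rewrite mulfVK // mulrC e //.
Qed.


Lemma dfunE t : dfun t = Posz ((t %% 2 == 0)%N * ((t + 11) %/ 12))%N.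
Proof.
rewrite /dfun modn2; case: (odd t) => //=; rewrite mul1n.
apply: ceil_def.
set q := ((t + 11) %/ 12)%N.
have A : (t%:R <= 12 * q%:R :> rat) by rewrite -natrM ler_nat; lia.
have B : (12 * q%:R < t%:R + 12 :> rat) by rewrite -natrM -natrD ltr_nat; lia.
have -> : ((Posz q)%:~R : rat) = q%:R by [].
rewrite intrB /=.
have -> : ((Posz q)%:~R : rat) = q%:R by [].
apply/andP; split; lra.
Qed.

Lemma intF (R : realType) (x y : int) (t : nat) :
  (x%:~R + 3 * y%:~R == t%:R / 2 :> R) = (2 * x + 6 * y == Posz t).
Proof.
rewrite -(eqr_int R) !intrD !intrM.
have -> : ((Posz t)%:~R : R) = t%:R by [].
by apply/eqP/eqP => h; lra.
Qed.

Lemma intF2 (R : realType) (y : int) (t : nat) :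
  (12 * y%:~R < t%:R :> R) = (12 * y < Posz t).
Proof.
rewrite -(ltr_int R) !intrM.
by have -> : ((Posz t)%:~R : R) = t%:R by [].
Qed.

Lemma h1lem (R : realType) (a X Y T : R) : 3 < a -> 12 * Y < T ->
  X + a * Y - T * (a + 3) / 12 < X + 3 * Y - T / 2.
Proof. move=> ha hy; have := mulr_gt0 (_ : 0 < a - 3) (_ : 0 < T - 12 * Y); nra. Qed.



Lemma h3lem (R : realType) (a X Y T : R) : 3 < a -> T / 12 < Y ->
  X + 3 * Y - T / 2 < X + a * Y - T * (a + 3) / 12.
Proof. move=> ha hy; have := mulr_gt0 (_ : 0 < a - 3) (_ : 0 < 12 * Y - T); nra. Qed.

Lemma h2lem (R : realType) (a X Y T : R) : Y = T / 12 ->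
  X + a * Y - T * (a + 3) / 12 = X + 3 * Y - T / 2.
Proof. by move=> ->; field. Qed.

Lemma bnd (R : realFieldType) (X Y Z T c : R) :
 (12*Y < T -> X + Z - c < X + 3*Y - T/2) ->
 (T/12 < Y -> X + 3*Y - T/2 < X + Z - c) ->
 (0 <= Y -> Y <= Z) -> 0 < T -> 0 <= c ->
 [|| [&& 0<=X, 0<=Y & X + Z <= c], [&& 0<=Y, X + 3*Y == T/2 & 12*Y < T],
     [&& 0<=X, c <= X+Z & X + 3*Y <= T/2], [&& 0<=X, 0<=Y & X + 3*Y <= T/2]
   | [&& 0<=Y, T/2 <= X+3*Y & X + Z <= c]] ->
 [&& 0 <= X, X <= c + T, 0 <= Y & Y <= c + T].
Proof.
move=> h1 h3 hZ hT hc.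
case/orP => [|/orP[|/orP[|/orP[]]]] => /and3P[hA hB hC].
- have ? := hZ hB; apply/and4P; split; lra.
- move/eqP: hB => hB; apply/and4P; split; lra.
- have [hw|hw|hw] := ltrgtP Y (T/12).
  + by have := h1 ltac:(lra); lra.
  + apply/and4P; split; lra.
  + apply/and4P; split; lra.
- apply/and4P; split; lra.
- have [hw|hw|hw] := ltrgtP Y (T/12).
  + have ? := hZ hA; apply/and4P; split; lra.
  + by have := h3 hw; lra.
  + have ? := hZ hA; apply/and4P; split; lra.
Qed.

Lemma count_sum5 T (p1 p2 p3 q1 q2 : pred T) (s : seq T) :
  (forall z, (p1 z : nat) + p2 z + p3 z = (q1 z : nat) + q2 z)%N ->
  (count p1 s + count p2 s + count p3 s = count q1 s + count q2 s)%N.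
Proof.
move=> h; elim: s => //= z s IH.
have := h z; lia.
Qed.

Lemma latcount_box (A : set (int*int)) (b : pred (int*int)) n :
  (forall z, `[< A z >] = b z) -> (forall z, b z -> z \in box n) ->
  latcount A = count b (box n).
Proof.
move=> hb hin; rewrite (@latcount_count A (box n) (box_uniq n)).
  by apply: eq_count => z; rewrite hb.
by move=> z Az; apply: hin; rewrite -hb; apply/asboolP.
Qed.

Theorem mainTheorem14 (R : realType) (a : R) (t : nat) :
  3 < a -> irrational a -> (0 < t)%N ->
  (ehrhartT ((a + 3) / 12) ((a + 3) / (12 * a)) t)%:Z =
  (ehrhartT (1 / 2 : R) (1 / 6) t)%:Z
    + (latcount (setD_ a t))%:Z - (latcount (setU_ a t))%:Z - dfun t.
Proof.
move=> ha ia t0.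
have hT : 0 < (t%:R : R) by rewrite ltr0n.
have hc : 0 <= (t%:R : R) * (a + 3) / 12.
  by apply: divr_ge0 => //; apply: mulr_ge0; lra.
pose M := Num.bound ((t%:R : R) * (a + 3) / 12 + t%:R).
have hM : (t%:R : R) * (a + 3) / 12 + t%:R < M%:R by apply: archi_boundP; lra.
have tM : (t < M)%N by rewrite -(ltr_nat R); lra.
pose X (z : int * int) : R := z.1%:~R.
pose Y (z : int * int) : R := z.2%:~R.
pose T : R := t%:R.
pose c : R := t%:R * (a + 3) / 12.
pose b1 z := [&& 0 <= X z, 0 <= Y z & X z + a * Y z <= c].
pose bF z := [&& 0 <= Y z, X z + 3 * Y z == T / 2 & 12 * Y z < T].
pose bU z := [&& 0 <= X z, c <= X z + a * Y z & X z + 3 * Y z <= T / 2].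
pose b2 z := [&& 0 <= X z, 0 <= Y z & X z + 3 * Y z <= T / 2].
pose bD z := [&& 0 <= Y z, T / 2 <= X z + 3 * Y z & X z + a * Y z <= c].
have hin : forall z, [|| b1 z, bF z, bU z, b2 z | bD z] -> z \in box M.
  move=> [x y] hz.
  have hYZ : 0 <= Y (x, y) -> Y (x, y) <= a * Y (x, y) by move=> ?; nra.
  have := @bnd R (X (x,y)) (Y (x,y)) (a * Y (x,y)) T c
    (@h1lem R a _ _ _ ha) (@h3lem R a _ _ _ ha) hYZ hT hc hz.
  case/and4P => hx1 hx2 hy1 hy2.
  apply: mem_box.
  - by rewrite -(ler0z R).
  - by rewrite -(ler0z R).
  - rewrite -(ltr_int R); have -> : ((Posz M)%:~R : R) = M%:R by [].
    rewrite /X /= in hx2; rewrite /c /T in hx2; lra.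
  - rewrite -(ltr_int R); have -> : ((Posz M)%:~R : R) = M%:R by [].
    rewrite /Y /= in hy2; rewrite /c /T in hy2; lra.
have E1 : ehrhartT ((a + 3) / 12) ((a + 3) / (12 * a)) t = count b1 (box M).
  apply: latcount_box => [z|z hz]; last by apply: hin; rewrite hz.
  by rewrite /= (@tri1 R a _ _ _ ha hT).
have E2 : ehrhartT (1 / 2 : R) (1 / 6) t = count b2 (box M).
  apply: latcount_box => [z|z hz]; last by apply: hin; rewrite hz !orbT.
  by rewrite /= (@tri2 R _ _ _ hT).
have ED : latcount (setD_ a t) = count bD (box M).
  apply: latcount_box => [z|z hz]; last by apply: hin; rewrite hz !orbT.
  apply: asbool_b; rewrite /setD_ /= /bD /Y /X -(ler0z R).
  by split => [[-> [-> ->]]|/and3P[-> -> ->]].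
have EU : latcount (setU_ a t) = count bU (box M).
  apply: latcount_box => [z|z hz]; last by apply: hin; rewrite hz !orbT.
  apply: asbool_b; rewrite /setU_ /= /bU /Y /X -(ler0z R).
  by split => [[-> [-> ->]]|/and3P[-> -> ->]].
have H : (count b1 (box M) + count bF (box M) + count bU (box M) =
          count b2 (box M) + count bD (box M))%N.
  apply: count_sum5 => z.
  apply: (@core R (X z) (Y z) (a * Y z) T c).
  - exact: h1lem.
  - exact: h2lem.
  - exact: h3lem.
  - exact: irr_lem.
  - exact: hT.
have HF : count bF (box M) = ((t %% 2 == 0)%N * ((t + 11) %/ 12))%N.
  rewrite -(@countF M t tM); apply: eq_in_count => z /allpairsP [[j i] [_ _ ->]].
  by rewrite /bF /X /Y /= intF intF2 ler0z.
rewrite E1 E2 ED EU dfunE.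
move: H; rewrite HF; lia.
Qed.
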